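(* Let $\mathcal{D}(\rho)=(1-p)\rho+\frac p3(X\rho X+Y\rho Y+Z\rho Z)$ and $\mathcal{E}(\rho)=(1-q)\rho+\frac q3(X\rho X+Y\rho Y+Z\rho Z)$ be depolarizing channels with $p,q\in[0,1]$. The entanglement-assisted classical communication capacity over a quantum trajectory is $$C_{\text{E,Q}}=2+H(\alpha)+\Big(1-p-q+\tfrac{4pq}{3}\Big)\log_2\Big(1-p-q+\tfrac{4pq}{3}\Big)+(p+q-2pq)\log_2\Big(\tfrac{p+q-2pq}{3}\Big)+\tfrac{2pq}{3}\log_2\tfrac{2pq}{9},$$ where $\alpha=1-\frac{2pq}{3}$ and $H(\alpha)=-\alpha\log_2\alpha-(1-\alpha)\log_2(1-\alpha)$.
   Context: $X,Y,Z$ are Pauli matrices, $\sigma_0=I,\sigma_1=X,\sigma_2=Y,\sigma_3=Z$, $|\pm\rangle=(|0\rangle\pm|1\rangle)/\sqrt2$, $0\log_2 0=0$. For a Pauli channel $\mathcal{N}(\rho)=\sum_i r_i\sigma_i\rho\sigma_i$, the entanglement-assisted classical capacity (superdense coding, pre-shared EPR pair, equiprobable inputs) is $C_E(\mathcal{N})=2+\sum_i r_i\log_2 r_i$. Quantum trajectory: given Kraus operators $\{D_i\}$ of $\mathcal{D}$ and $\{E_j\}$ of $\mathcal{E}$ (multiples of Pauli matrices), the switched channel on data $\rho$ and control $\omega=|+\rangle\langle+|$ is $\sum_{i,j}W_{i,j}(\rho\otimes\omega)W_{i,j}^\dagger$ with $W_{i,j}=E_jD_i\otimes|0\rangle\langle0|+D_iE_j\otimes|1\rangle\langle1|$.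 Its output has the form $p_+\mathcal{S}_+(\rho)\otimes|+\rangle\langle+|+p_-\mathcal{S}_-(\rho)\otimes|-\rangle\langle-|$ (commuting Kraus pairs go to the $|+\rangle$ branch, anticommuting pairs to the $|-\rangle$ branch), with $\mathcal{S}_\pm$ normalized Pauli channels; the capacity is defined as $C_{\text{E,Q}}=p_+C_E(\mathcal{S}_+)+p_-C_E(\mathcal{S}_-)$. *)

(* Defs.v *)
From HB Require Import structures.
From mathcomp Require Import all_boot all_order all_algebra all_field.
From mathcomp Require Import all_classical all_reals all_analysis.
Set Implicit Arguments. Unset Strict Implicit. Unset Printing Implicit Defensive.
Import Order.TTheory GRing.Theory Num.Theory.
Local Open Scope ring_scope.

(* ---------- Pauli matrices sigma_0 = I, sigma_1 = X, sigma_2 = Y, sigma_3 = Z ---------- *)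
Definition pauli (k : 'I_4) : 'M[algC]_2 :=
  \matrix_(a < 2, b < 2)
    match val k with
    | 0%N => if a == b then 1 else 0
    | 1%N => if a != b then 1 else 0
    | 2%N => if a == b then 0 else if val a == 0%N then - 'i else 'i
    | _   => if a == b then (if val a == 0%N then 1 else -1) else 0
    end.

(* Kraus pair (D_i, E_j) = (sigma_i, sigma_j) (up to scalars) commutes *)
Definition pauli_commute (i j : 'I_4) : bool :=
  pauli i *m pauli j == pauli j *m pauli i.

(* index k such that E_j D_i = sigma_j sigma_i is a scalar multiple of sigma_k,
   i.e. sigma_k (sigma_j sigma_i) is a scalar matrix; then
   (sigma_j sigma_i) rho (sigma_j sigma_i)^dagger = sigma_k rho sigma_k. *)
Definition pauli_prod (i j : 'I_4) : 'I_4 :=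
  odflt ord0 [pick k | is_scalar_mx (pauli k *m (pauli j *m pauli i))].

(* ---------- Pauli channels: N(rho) = sum_i r_i sigma_i rho sigma_i, given by r ---------- *)
Section Cap.
Variable R : realType.

Definition log2 (x : R) : R := ln x / ln 2.

(* entanglement-assisted capacity  C_E(N) = 2 + sum_i r_i log2 r_i  (0 log 0 = 0) *)
Definition CE (r : 'I_4 -> R) : R := 2 + \sum_(i < 4) r i * log2 (r i).

Definition depolarizing (p : R) : 'I_4 -> R :=
  fun i => if i == ord0 then 1 - p else p / 3.

(* Quantum trajectory with Kraus operators D_i = sqrt(r_i) sigma_i, E_j = sqrt(s_j) sigma_j,
   control |+>: commuting pairs contribute r_i s_j sigma_k rho sigma_k (x) |+><+|,
   anticommuting pairs contribute r_i s_j sigma_k rho sigma_k (x) |-><-|, k = pauli_prod i j. *)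
Definition traj_weight (b : bool) (r s : 'I_4 -> R) : R :=
  \sum_(i < 4) \sum_(j < 4 | pauli_commute i j == b) r i * s j.

Definition traj_channel (b : bool) (r s : 'I_4 -> R) : 'I_4 -> R :=
  fun k => (\sum_(i < 4) \sum_(j < 4 | (pauli_commute i j == b) && (pauli_prod i j == k))
              r i * s j) / traj_weight b r s.

Definition CEQ (r s : 'I_4 -> R) : R :=
  traj_weight true r s * CE (traj_channel true r s)
  + traj_weight false r s * CE (traj_channel false r s).

Definition H2 (a : R) : R := - (a * log2 a) - (1 - a) * log2 (1 - a).
End Cap.

(* Main.v *)
Require Import Defs.
From HB Require Import structures.
From mathcomp Require Import all_boot all_order all_algebra all_field.
From mathcomp Require Import all_classical all_reals all_analysis.
From mathcomp Require Import ring lra.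
Import Order.TTheory GRing.Theory Num.Theory.
Local Open Scope ring_scope.

Definition o0 : 'I_2 := @Ordinal 2 0 isT.
Definition o1 : 'I_2 := @Ordinal 2 1 isT.
Lemma I2 (i : 'I_2) : i = o0 \/ i = o1.
Proof. case: i => [[|[|//]] Hi]; [left|right]; exact: val_inj. Qed.

Lemma scal2 (A : 'M[algC]_2) :
  is_scalar_mx A = [&& A o0 o1 == 0, A o1 o0 == 0 & A o0 o0 == A o1 o1].
Proof.
apply/is_scalar_mxP/and3P.
  by move=> [a ->]; rewrite !mxE /=; split.
move=> [/eqP h1 /eqP h2 /eqP h3]; exists (A o0 o0); apply/matrixP => i j.
by rewrite !mxE; case: (I2 i) => ->; case: (I2 j) => -> /=; rewrite ?mulr1n ?mulr0n.
Qed.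

Lemma sqi : 'i * 'i = -1 :> algC.
Proof. by rewrite -expr2 sqrCi. Qed.

Lemma neqm11 : (1 == -1 :> algC) = false.
Proof. by apply/negbTE; rewrite -addr_eq0 -mulr2n mulrn_eq0 oner_eq0. Qed.

Lemma neqNii : (- 'i == 'i :> algC) = false.
Proof. by apply/negbTE; rewrite eq_sym -addr_eq0 -mulr2n mulrn_eq0 negb_or neq0Ci. Qed.

Lemma neqiN : ('i == - 'i :> algC) = false.
Proof. by rewrite eq_sym neqNii. Qed.
Lemma neqm11' : (-1 == 1 :> algC) = false.
Proof. by rewrite eq_sym neqm11. Qed.

Lemma iz : ('i == 0 :> algC) = false.
Proof. by apply/negbTE; apply: neq0Ci. Qed.

Ltac ev0 := rewrite ?mxE ?big_ord_recl ?big_ord0 /= ?mxE /= ?mul0r ?mulr0 ?mul1r ?mulr1 ?add0r ?addr0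
  ?mulNr ?mulrN ?sqi ?opprK ?mulN1r ?mulrN1 ?oppr0 ?eqxx ?oppr_eq0 ?neq0Ci ?oner_eq0
  ?neqm11 ?neqNii ?neqiN ?neqm11' ?iz //.
Ltac ev := ev0; ev0; ev0; ev0.

Definition ctab (i j : nat) : bool := (i == 0)%N || (j == 0)%N || (i == j).
Definition ptab (i j : nat) : nat :=
  match i, j with 0, j => j | i, 0 => i | 1,2 => 3 | 2,1 => 3 | 1,3 => 2 | 3,1 => 2
  | 2,3 => 1 | 3,2 => 1 | _,_ => 0 end%N.


Lemma eq2 (A B : 'M[algC]_2) :
  (A == B) = [&& A o0 o0 == B o0 o0, A o0 o1 == B o0 o1, A o1 o0 == B o1 o0 & A o1 o1 == B o1 o1].
Proof.
apply/eqP/and4P.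
  by move=> ->; rewrite !eqxx.
move=> [/eqP h1 /eqP h2 /eqP h3 /eqP h4]; apply/matrixP => i j.
by case: (I2 i) => ->; case: (I2 j) => ->.
Qed.

Lemma comm_tab (i j : 'I_4) : pauli_commute i j = ctab i j.
Proof.
rewrite /pauli_commute /ctab eq2 /pauli.
case: i => [[|[|[|[|//]]]] Hi]; case: j => [[|[|[|[|//]]]] Hj]; ev.
Qed.

Lemma scal_tab (i j k : 'I_4) :
  is_scalar_mx (pauli k *m (pauli j *m pauli i)) = (k == ptab i j :> nat).
Proof.
rewrite scal2 /ptab /pauli.
case: i => [[|[|[|[|//]]]] Hi]; case: j => [[|[|[|[|//]]]] Hj];
case: k => [[|[|[|[|//]]]] Hk]; ev.
Qed.

Lemma prod_val (i j : 'I_4) : val (pauli_prod i j) = ptab i j.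
Proof.
rewrite /pauli_prod; case: pickP => [k | H] /=.
  by rewrite scal_tab => /eqP.
have hb : (ptab i j < 4)%N by clear H; case: i j => [[|[|[|[|//]]]] ?] [[|[|[|[|//]]]] ?].
by move: (H (inord (ptab i j))); rewrite scal_tab inordK // eqxx.
Qed.

Lemma prod_eq (i j k : 'I_4) : (pauli_prod i j == k) = (ptab i j == k)%N.
Proof. by rewrite -val_eqE /= prod_val. Qed.

Lemma dep_val (R : realType) (p : R) i : depolarizing p i = if (val i == 0)%N then 1 - p else p / 3.
Proof. by case: i => [[|n] Hn]. Qed.

Lemma tw (R : realType) (p q : R) b :
  traj_weight b (depolarizing p) (depolarizing q) = if b then 1 - 2 * p * q / 3 else 2 * p * q / 3.
Proof.
rewrite /traj_weight; under eq_bigr do rewrite big_mkcond /=.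
rewrite !big_ord_recl !big_ord0 /= !comm_tab !dep_val /=.
by case: b => /=; field.
Qed.

Lemma tc (R : realType) (p q : R) b k :
  traj_channel b (depolarizing p) (depolarizing q) k =
  (if b then (if (val k == 0)%N then 1 - p - q + 4 * p * q / 3 else (p + q - 2 * p * q) / 3)
   else (if (val k == 0)%N then 0 else 2 * p * q / 9))
  / traj_weight b (depolarizing p) (depolarizing q).
Proof.
rewrite /traj_channel; congr (_ / _).
under eq_bigr do rewrite big_mkcond /=.
rewrite !big_ord_recl !big_ord0 /= !comm_tab !prod_eq !dep_val /=.
by case: k => [[|[|[|[|//]]]] Hk]; case: b => /=; field.
Qed.

Lemma log2_div (R : realType) (x y : R) : 0 <= x -> 0 < y ->
  x * log2 (x / y) = x * log2 x - x * log2 y.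
Proof.
rewrite le_eqVlt => /orP [/eqP <-|hx] hy; first by rewrite !mul0r subr0.
by rewrite /log2 ln_div ?posrE // mulrBl mulrBr.
Qed.

Lemma hl (R : realType) (x y : R) : 0 <= x -> 0 < y ->
  y * (x / y * log2 (x / y)) = x * log2 x - x * log2 y.
Proof.
move=> hx hy; rewrite mulrA (mulrC y) divfK ?gt_eqF //; exact: log2_div.
Qed.

Lemma key (R : realType) (al a b c : R) :
  0 < al -> 0 <= a -> 0 <= b -> 0 <= c -> a + 3 * b = al -> 3 * c = 1 - al ->
  al * CE (fun k : 'I_4 => (if (val k == 0)%N then a else b) / al)
  + (1 - al) * CE (fun k : 'I_4 => (if (val k == 0)%N then 0 else c) / (1 - al))
  = 2 + H2 al + a * log2 a + 3 * b * log2 b + 3 * c * log2 c.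
Proof.
move=> hal ha hb hc e1 e2.
rewrite /CE /H2 !big_ord_recl !big_ord0 /=.
have l21 : log2 (1 : R) = 0 by rewrite /log2 ln1 mul0r.
rewrite !mul0r !add0r !addr0.
have [w0|wp] := eqVneq (1 - al) 0.
  have al1 : al = 1 by lra.
  have c0 : c = 0 by lra.
  rewrite w0 c0 al1 ?mul0r ?mulr0 ?addr0 ?mul1r ?divr1 ?l21 ?mulr0 ?mul0r ?addr0 ?subr0 ?oppr0.
  ring.
have wpos : 0 < 1 - al by rewrite lt_neqAle eq_sym wp /=; lra.
rewrite !mulrDr !hl //.
set L1 := log2 al. set L2 := log2 (1 - al).
have h1 : (a + 3*b) * L1 = al * L1 by rewrite e1.
have h2 : 3*c*L2 = (1-al)*L2 by rewrite e2.
lra.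
Qed.


Theorem corollary6 (R : realType) (p q : R) :
  0 <= p <= 1 -> 0 <= q <= 1 ->
  CEQ (depolarizing p) (depolarizing q) =
    2 + H2 (1 - 2 * p * q / 3)
    + (1 - p - q + 4 * p * q / 3) * log2 (1 - p - q + 4 * p * q / 3)
    + (p + q - 2 * p * q) * log2 ((p + q - 2 * p * q) / 3)
    + (2 * p * q / 3) * log2 (2 * p * q / 9).
Proof.
move=> /andP [p0 p1] /andP [q0 q1].
set al := 1 - 2 * p * q / 3.
rewrite /CEQ.
have -> : traj_channel true (depolarizing p) (depolarizing q) =
  (fun k : 'I_4 => (if (val k == 0)%N then 1 - p - q + 4 * p * q / 3
                    else (p + q - 2 * p * q) / 3) / al).
  by apply: funext => k; rewrite tc tw.
have -> : traj_channel false (depolarizing p) (depolarizing q) =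
  (fun k : 'I_4 => (if (val k == 0)%N then 0 else 2 * p * q / 9) / (1 - al)).
  apply: funext => k; rewrite tc tw; congr (_ / _); rewrite /al; ring.
rewrite !tw /= -/al.
have -> : 2 * p * q / 3 = 1 - al by rewrite /al; ring.
have pq0 : 0 <= p * q by nra.
have pq1 : p * q <= 1 by nra.
rewrite key /al.
- have -> : 3 * ((p + q - 2 * p * q) / 3) = p + q - 2 * p * q by field.
  by have -> : 3 * (2 * p * q / 9) = 1 - (1 - 2 * p * q / 3) by field.
- lra.
- have : 0 <= (1 - p) * (1 - q) by nra.
  lra.
- have : 0 <= p * (1 - q) + q * (1 - p) by nra.
  lra.
- lra.
- by field.
- by field.
Qed.
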